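(* For all types $A$, $B$, $C$: if $A \equiv C$, $C \equiv B$, $A \simeq C$ and $C \simeq B$, then $A \simeq B$.
   Context: Types and rows share one grammar: $A,B,C,\rho ::= X \mid \alpha \mid \star \mid \iota \mid A\to B \mid \forall X{:}K.\,A \mid [\rho] \mid \langle\rho\rangle \mid \cdot \mid \ell{:}A;\rho$, where $X$ ranges over type variables (bound by $\forall$), $\alpha$ over type names, $\star$ is the dynamic type (also serving as the dynamic row), $\iota$ over base types, $[\rho]$ and $\langle\rho\rangle$ are record and variant types, $\cdot$ is the empty row, $\ell$ ranges over labels, and $K\in\{\mathsf T,\mathsf R\}$ is a kind. Types are identified up to renaming of bound variables; $\mathit{ftv}(A)$ is the set of free type variables. Row matching $\rho \triangleright_\ell A,\rho'$ is defined by: $(\ell{:}A;\rho)\triangleright_\ell A,\rho$; if $\ell'\neq\ell$ and $\rho\triangleright_\ell A,\rho'$ then $(\ell'{:}B;\rho)\triangleright_\ell A,(\ell'{:}B;\rho')$; and $\star\triangleright_\ell \star,\star$. $\mathbf{QPoly}(A)$ holds iff $A$ is not of the form $\forall X{:}K.\,B$ and $\star$ occurs in $A$. Type equivalence $\equiv$ is the least equivalence relation that is a congruence for $\to$, $\forall X{:}K.\,-$, $[-]$, $\langle-\rangle$ and $\ell{:}-;-$, and contains $\ell{:}A;\ell'{:}B;\rho \equiv \ell'{:}B;\ell{:}A;\rho$ whenever $\ell\neq\ell'$. Consistency $\simeq$ is defined inductively: $A\simeq A$; $\star\simeq A$; $A\simeq\star$; $A_1\to A_2\simeq B_1\to B_2$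 if $A_1\simeq B_1$ and $A_2\simeq B_2$; $\forall X{:}K.A\simeq\forall X{:}K.B$ if $A\simeq B$; $\forall X{:}K.A\simeq B$ if $\mathbf{QPoly}(B)$, $X\notin\mathit{ftv}(B)$ and $A\simeq B$; $A\simeq\forall X{:}K.B$ if $\mathbf{QPoly}(A)$, $X\notin\mathit{ftv}(A)$ and $A\simeq B$; $[\rho_1]\simeq[\rho_2]$ and $\langle\rho_1\rangle\simeq\langle\rho_2\rangle$ if $\rho_1\simeq\rho_2$; $\ell{:}A;\rho_1\simeq B$ if $B\triangleright_\ell B',\rho_2$, $A\simeq B'$ and $\rho_1\simeq\rho_2$; $A\simeq \ell{:}B;\rho_2$ if $A\triangleright_\ell A',\rho_1$, $A'\simeq B$ and $\rho_1\simeq\rho_2$. *)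

(* Defs.v *)
From Stdlib Require Import Arith.

Inductive kind : Type := KT | KR.

Definition label := nat.
Definition tyname := nat.
Definition basety := nat.

(* A,B,C,rho ::= X | alpha | * | iota | A -> B | forall X:K. A | [rho] | <rho> | . | l:A;rho
   Type variables X are de Bruijn indices (types identified up to alpha). *)
Inductive ty : Type :=
  | TVar (n : nat)
  | TName (a : tyname)
  | TDyn
  | TBase (i : basety)
  | TArr (A B : ty)
  | TAll (K : kind) (A : ty)
  | TRec (r : ty)
  | TVariant (r : ty)
  | REmpty
  | RExt (l : label) (A : ty) (r : ty).

Fixpoint shift (c : nat) (t : ty) : ty :=
  match t with
  | TVar n => if n <? c then TVar n else TVar (S n)
  | TName a => TName a
  | TDyn => TDyn
  | TBase i => TBase i
  | TArr A B => TArr (shift c A) (shift c B)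
  | TAll K A => TAll K (shift (S c) A)
  | TRec r => TRec (shift c r)
  | TVariant r => TVariant (shift c r)
  | REmpty => REmpty
  | RExt l A r => RExt l (shift c A) (shift c r)
  end.

Inductive rmatch : ty -> label -> ty -> ty -> Prop :=
  | rm_head : forall l A r, rmatch (RExt l A r) l A r
  | rm_tail : forall l l' A B r r',
      l' <> l -> rmatch r l A r' -> rmatch (RExt l' B r) l A (RExt l' B r')
  | rm_dyn : forall l, rmatch TDyn l TDyn TDyn.

Fixpoint dyn_occurs (t : ty) : Prop :=
  match t with
  | TVar _ | TName _ | TBase _ | REmpty => False
  | TDyn => True
  | TArr A B => dyn_occurs A \/ dyn_occurs B
  | TAll _ A => dyn_occurs A
  | TRec r | TVariant r => dyn_occurs r
  | RExt _ A r => dyn_occurs A \/ dyn_occurs r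
  end.

Definition QPoly (A : ty) : Prop :=
  (~ exists K B, A = TAll K B) /\ dyn_occurs A.

Inductive tyequiv : ty -> ty -> Prop :=
  | eq_refl' : forall A, tyequiv A A
  | eq_sym' : forall A B, tyequiv A B -> tyequiv B A
  | eq_trans' : forall A B C, tyequiv A B -> tyequiv B C -> tyequiv A C
  | eq_arr : forall A1 A2 B1 B2,
      tyequiv A1 B1 -> tyequiv A2 B2 -> tyequiv (TArr A1 A2) (TArr B1 B2)
  | eq_all : forall K A B, tyequiv A B -> tyequiv (TAll K A) (TAll K B)
  | eq_rec : forall r1 r2, tyequiv r1 r2 -> tyequiv (TRec r1) (TRec r2)
  | eq_variant : forall r1 r2, tyequiv r1 r2 -> tyequiv (TVariant r1) (TVariant r2)
  | eq_ext : forall l A B r1 r2,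
      tyequiv A B -> tyequiv r1 r2 -> tyequiv (RExt l A r1) (RExt l B r2)
  | eq_swap : forall l l' A B r,
      l <> l' -> tyequiv (RExt l A (RExt l' B r)) (RExt l' B (RExt l A r)).

(* consistency.  The side condition X notin ftv(B) for  forall X:K.A ~ B
   is rendered in de Bruijn form by comparing A with (shift 0 B). *)
Inductive consistent : ty -> ty -> Prop :=
  | c_refl : forall A, consistent A A
  | c_dynl : forall A, consistent TDyn A
  | c_dynr : forall A, consistent A TDyn
  | c_arr : forall A1 A2 B1 B2,
      consistent A1 B1 -> consistent A2 B2 -> consistent (TArr A1 A2) (TArr B1 B2)
  | c_all : forall K A B, consistent A B -> consistent (TAll K A) (TAll K B)
  | c_alll : forall K A B, QPoly B -> consistent A (shift 0 B) -> consistent (TAll K A) B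
  | c_allr : forall K A B, QPoly A -> consistent (shift 0 A) B -> consistent A (TAll K B)
  | c_rec : forall r1 r2, consistent r1 r2 -> consistent (TRec r1) (TRec r2)
  | c_variant : forall r1 r2, consistent r1 r2 -> consistent (TVariant r1) (TVariant r2)
  | c_extl : forall l A r1 B B' r2,
      rmatch B l B' r2 -> consistent A B' -> consistent r1 r2 ->
      consistent (RExt l A r1) B
  | c_extr : forall l A A' r1 B r2,
      rmatch A l A' r1 -> consistent A' B -> consistent r1 r2 ->
      consistent A (RExt l B r2).

(* Main.v *)
Require Import Defs.

Inductive rm : ty -> label -> ty -> ty -> Prop :=
  | rmh : forall l A r, rm (RExt l A r) l A r
  | rmt : forall l l' A B r r',
      l' <> l -> rm r l A r' -> rm (RExt l' B r) l A (RExt l' B r').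

Inductive se : ty -> ty -> Prop :=
  | se_var : forall n, se (TVar n) (TVar n)
  | se_name : forall a, se (TName a) (TName a)
  | se_dyn : se TDyn TDyn
  | se_base : forall i, se (TBase i) (TBase i)
  | se_emp : se REmpty REmpty
  | se_arr : forall A1 A2 B1 B2, se A1 B1 -> se A2 B2 -> se (TArr A1 A2) (TArr B1 B2)
  | se_all : forall K A B, se A B -> se (TAll K A) (TAll K B)
  | se_rec : forall A B, se A B -> se (TRec A) (TRec B)
  | se_vnt : forall A B, se A B -> se (TVariant A) (TVariant B)
  | se_ext : forall l A r Y A' r', rm Y l A' r' -> se A A' -> se r r' -> se (RExt l A r) Y.

#[local] Hint Constructors rm se rmatch consistent : core.

Lemma rm_rmatch : forall Y l A r, rm Y l A r -> rmatch Y l A r.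
Proof. induction 1; eauto. Qed.

Lemma se_consistent : forall X Y, se X Y -> consistent X Y.
Proof. induction 1; eauto using rm_rmatch. Qed.

Lemma se_refl : forall X, se X X.
Proof. induction X; eauto. Qed.

Lemma rm_comm : forall Z l0 B rz, rm Z l0 B rz -> forall l A rz', l0 <> l ->
  rm rz l A rz' -> exists Z', rm Z l A Z' /\ rm Z' l0 B rz'.
Proof.
  induction 1; intros l1 A1 rz' Hne Hm.
  - eauto.
  - inversion Hm; subst.
    + eauto.
    + destruct (IHrm _ _ _ Hne ltac:(eassumption)) as [Z0 [H1 H2]]. eauto.
Qed.

Lemma se_match : forall Y l A r, rm Y l A r -> forall Z, se Y Z ->
  exists A' r', rm Z l A' r' /\ se A A' /\ se r r'.
Proof.
  induction 1; intros Z HZ; inversion HZ; subst.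
  - eauto.
  - match goal with Hs : se r _ |- _ => destruct (IHrm _ Hs) as [A2 [r2 [Hm [Ha Hr]]]] end.
    assert (Hne : l' <> l) by auto.
    match goal with Hz : rm Z l' _ _ |- _ => destruct (rm_comm _ _ _ _ Hz _ _ _ Hne Hm) as [Z' [H1 H2]] end.
    exists A2, Z'. split; [exact H1|split; [exact Ha|]]. eauto.
Qed.

Lemma se_trans : forall X Y, se X Y -> forall Z, se Y Z -> se X Z.
Proof.
  induction 1; intros Z HZ; try (inversion HZ; subst; eauto; fail).
  destruct (se_match _ _ _ _ H _ HZ) as [A2 [r2 [Hm [Ha Hr]]]]. eauto.
Qed.

Lemma se_sym_ext : forall Y l A' r', rm Y l A' r' -> forall A r,
  se A' A -> se r' r -> se Y (RExt l A r).
Proof.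
  induction 1; intros A0 r0 Ha Hr.
  - eauto.
  - inversion Hr; subst. eauto.
Qed.

Lemma se_sym : forall X Y, se X Y -> se Y X.
Proof. induction 1; eauto using se_sym_ext. Qed.

Lemma equiv_se : forall A B, tyequiv A B -> se A B.
Proof.
  induction 1; eauto using se_refl, se_sym, se_trans.
  all: try (eapply se_ext; [eapply rmt; [auto|apply rmh] | apply se_refl |
    eapply se_ext; [apply rmh| apply se_refl | apply se_refl]]).
Qed.

Theorem mainTheorem6 : forall A B C : ty,
  tyequiv A C -> tyequiv C B -> consistent A C -> consistent C B ->
  consistent A B.
Proof.
  intros A B C H1 H2 _ _. apply se_consistent, equiv_se. eapply eq_trans'; eauto.
Qed.
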